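(* Let $g\geqslant1$ be odd and $i\geqslant0$ an integer. Then: (i) there exists $u_{g,i}\in\mathbb{C}[\alpha,\gamma]$ which is a unit modulo $J_g^-$ such that $u_{g,i}\gamma^i\zeta^-_{g-2i-1}\equiv\gamma^{i+1}\zeta^-_{g-2i-2}\pmod{J_g^-}$; (ii) there exists $v_{g,i}\in\mathbb{C}[\alpha,\gamma]$ which is a unit modulo $J_g^-$ such that $v_{g,i}\gamma^i\zeta^-_{g-2i-1}\equiv\gamma^{i+1}\zeta^-_{g-2i-3}\pmod{J_g^-}$.
   Context: $\zeta_k^-\in\mathbb{C}[\alpha,\gamma]$: $\zeta^-_i=0$ for $i<0$, $\zeta^-_0=1$, $\zeta^-_{k+1}=\alpha\zeta^-_k-16k^2\zeta^-_{k-1}+2k(k-1)\gamma\zeta^-_{k-2}$ for $k$ odd and $\zeta^-_{k+1}=\alpha\zeta^-_k+2k(k-1)\gamma\zeta^-_{k-2}$ for $k$ even ($k\geqslant0$); $J^-_k=(\zeta^-_k,\zeta^-_{k+1},\zeta^-_{k+2})$. A unit modulo an ideal $J$ is an element whose image in $\mathbb{C}[\alpha,\gamma]/J$ is invertible. *)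

(* Defs.v *)
From mathcomp Require Import all_boot all_algebra.
From mathcomp.real_closed Require Import complex.
From mathcomp Require Import Rstruct.

Set Implicit Arguments.
Unset Strict Implicit.
Unset Printing Implicit Defensive.
Import GRing.Theory.
Local Open Scope ring_scope.

Definition Cx : fieldType := complex Rdefinitions.R.

(* The polynomial ring C[alpha, gamma], represented as (C[alpha])[gamma]. *)
Definition CAG := {poly {poly Cx}}.

Definition alpha : CAG := ('X : {poly Cx})%:P.
Definition gamma : CAG := 'X.

(* zeta^-_n for n >= 0:
   zeta_0 = 1, and for k >= 0
   zeta_{k+1} = alpha zeta_k - [k odd] 16 k^2 zeta_{k-1} + 2k(k-1) gamma zeta_{k-2},
   with zeta_i = 0 for i < 0. *)
Fixpoint zetan (n : nat) : CAG :=
  match n with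
  | 0 => 1
  | k.+1 =>
      let zm1 := match k with 0 => 0 | k1.+1 => zetan k1 end in
      let zm2 := match k with 0 => 0 | 1 => 0 | k2.+2 => zetan k2 end in
      alpha * zetan k
      - (if odd k then (16 * k ^ 2)%N%:R * zm1 else 0)
      + (2 * k * (k - 1))%N%:R * gamma * zm2
  end.

Definition zeta (i : int) : CAG :=
  match i with
  | Posz n => zetan n
  | Negz _ => 0
  end.

Definition inJ (k : nat) (f : CAG) : Prop :=
  exists a b c : CAG,
    f = a * zetan k + b * zetan k.+1 + c * zetan k.+2.

Definition congJ (k : nat) (f h : CAG) : Prop := inJ k (f - h).

Definition unit_modJ (k : nat) (u : CAG) : Prop :=
  exists w : CAG, congJ k (u * w) 1.

(* Main.v *)
Require Import Defs.
From mathcomp Require Import all_boot all_algebra.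
From mathcomp.real_closed Require Import complex.
From mathcomp Require Import Rstruct.
From mathcomp Require Import ring lra zify.
Import GRing.Theory Num.Theory.
Local Open Scope ring_scope.
Set Implicit Arguments.
Unset Strict Implicit.

Section J.
Variable k : nat.
Lemma inJ0 : inJ k 0.
Proof. by exists 0, 0, 0; rewrite !mul0r !addr0. Qed.
Lemma inJD f h : inJ k f -> inJ k h -> inJ k (f + h).
Proof.
move=> [a [b [c ->]]] [a' [b' [c' ->]]].
exists (a + a'), (b + b'), (c + c'); ring.
Qed.
Lemma inJM c f : inJ k f -> inJ k (c * f).
Proof.
move=> [a [b [c' ->]]]; exists (c * a), (c * b), (c * c'); ring.
Qed.
Lemma inJN f : inJ k f -> inJ k (- f).
Proof. by move=> h; rewrite -mulN1r; apply: inJM. Qed.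
Lemma inJB f h : inJ k f -> inJ k h -> inJ k (f - h).
Proof. by move=> hf hh; apply: inJD => //; apply: inJN. Qed.
Lemma inJz0 : inJ k (zetan k).
Proof. by exists 1, 0, 0; ring. Qed.
Lemma inJz1 : inJ k (zetan k.+1).
Proof. by exists 0, 1, 0; ring. Qed.
Lemma inJz2 : inJ k (zetan k.+2).
Proof. by exists 0, 0, 1; ring. Qed.
Lemma inJ_eq f h : f = h -> inJ k f -> inJ k h.
Proof. by move=> ->. Qed.
End J.
Arguments inJ0 {k}. Arguments inJD {k f h}. Arguments inJM {k} c {f}.
Arguments inJN {k f}. Arguments inJB {k f h}. Arguments inJz0 {k}.
Arguments inJz1 {k}. Arguments inJz2 {k}. Arguments inJ_eq {k f h}.

Lemma zetaSSS k : zetan k.+3 = alpha * zetan k.+2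
  - (if odd k.+2 then (16 * k.+2 ^ 2)%N%:R * zetan k.+1 else 0)
  + (2 * k.+2 * (k.+2 - 1))%N%:R * gamma * zetan k.
Proof. reflexivity. Qed.

Lemma zeta_even j : zetan (j.*2.+3) =
  alpha * zetan (j.*2.+2) + (2 * j.*2.+2 * j.*2.+1)%N%:R * gamma * zetan (j.*2).
Proof. by rewrite zetaSSS /= odd_double /= subr0 subn1. Qed.

Lemma zeta_odd j : zetan (j.*2.+4) =
  alpha * zetan (j.*2.+3) - (16 * (j.*2.+3) ^ 2)%N%:R * zetan (j.*2.+2)
  + (2 * j.*2.+3 * j.*2.+2)%N%:R * gamma * zetan (j.*2.+1).
Proof. by rewrite (zetaSSS j.*2.+1) /= odd_double /= subn1. Qed.

Lemma zeta1 : zetan 1 = alpha * zetan 0.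
Proof.
have -> : zetan 1 = alpha * zetan 0 - 0 + (2 * 0 * (0 - 1))%N%:R * gamma * 0 by reflexivity.
rewrite (mulr0 ((2 * 0 * (0 - 1))%N%:R * gamma)) (addr0 (alpha * zetan 0 - 0)).
exact: (subr0 (alpha * zetan 0)).
Qed.
Lemma zeta2 : zetan 2 = alpha * zetan 1 - (16 * 1 ^ 2)%N%:R * zetan 0.
Proof.
have -> : zetan 2 = alpha * zetan 1 - (16 * 1 ^ 2)%N%:R * zetan 0
   + (2 * 1 * (1 - 1))%N%:R * gamma * 0 by reflexivity.
rewrite (mulr0 ((2 * 1 * (1 - 1))%N%:R * gamma)).
exact: addr0.
Qed.

Definition CR := complex Rdefinitions.R.
Lemma natCx_neq0 (n : nat) : (n != 0)%N -> (n%:R : Cx) != 0.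
Proof. move=> hn. have : (n%:R : CR) != 0 by rewrite pnatr_eq0. exact. Qed.

Lemma natCAG (n : nat) : (n%:R : CAG) = ((n%:R : Cx)%:P)%:P.
Proof. by rewrite !rmorph_nat. Qed.

Lemma inJ_scale k (n : nat) f : (n != 0)%N -> inJ k (n%:R * f) -> inJ k f.
Proof.
move=> hn h; have := inJM (((n%:R : Cx)^-1)%:P%:P) h.
rewrite mulrA natCAG -!polyCM mulVf ?natCx_neq0 // mul1r; exact.
Qed.

Lemma scale_rel k (n : nat) (Y x : CAG) (p : {poly Cx}) : (n != 0)%N ->
  inJ k (n%:R * Y - p%:P * x) -> inJ k (Y - ((((n%:R : Cx)^-1)%:P * p)%:P * x)).
Proof.
move=> hn h; apply: (inJ_scale (k:=k) hn); apply: inJ_eq h.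
rewrite mulrBr polyCM mulrA mulrA natCAG; congr (_ - _).
rewrite -[X in X * p%:P]polyCM -(polyCM ((n%:R : Cx)) ((n%:R : Cx)^-1)).
rewrite mulfV ?natCx_neq0 //.
by rewrite !polyC1 mul1r.
Qed.

Definition A h j := gamma ^+ (h - j) * zetan j.*2.
Definition B h j := gamma ^+ (h - j) * zetan j.*2.+1.
Definition ec j := (2 * j.*2.+2 * j.*2.+1)%N.
Definition oc j := (2 * j.*2.+3 * j.*2.+2)%N.
Definition cc j := (16 * (j.*2.+3) ^ 2)%N.

Lemma relE h j : (j < h)%N -> B h j.+1 = alpha * A h j.+1 + (ec j)%:R * A h j.
Proof.
move=> hj; rewrite /B /A doubleS zeta_even /ec.
have -> : (h - j = (h - j.+1).+1)%N by lia.
rewrite exprS; ring.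
Qed.

Lemma relO h j : (j < h)%N -> gamma ^+ (h - j.+1) * zetan (j.*2.+4) =
  alpha * B h j.+1 - (cc j)%:R * A h j.+1 + (oc j)%:R * B h j.
Proof.
move=> hj; rewrite /B /A doubleS zeta_odd /oc /cc.
have -> : (h - j = (h - j.+1).+1)%N by lia.
rewrite exprS; ring.
Qed.

Fixpoint Sq (h d : nat) : {poly Cx} * {poly Cx} :=
  match d with
  | 0 => (0, 1)
  | d'.+1 => let j := (h - d'.+1)%N in
      ((((oc j)%:R : Cx)^-1)%:P * (((cc j)%:R : Cx)%:P * (Sq h d').2 - 'X * (Sq h d').1),
       (((ec j)%:R : Cx)^-1)%:P * ((Sq h d').1 - 'X * (Sq h d').2))
  end.

Lemma gx0 h : inJ h.*2.+1 (gamma * zetan h.*2).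
Proof.
apply: (@inJ_scale _ (ec h)); first by rewrite /ec.
apply: (@inJ_eq _ ( zetan h.*2.+3 - alpha * zetan h.*2.+2)).
  by rewrite zeta_even /ec; ring.
by apply: inJB; [apply: inJz2 | apply: inJM; apply: inJz1].
Qed.

Lemma gammaJ h Y (p : {poly Cx}) : inJ h.*2.+1 (Y - p%:P * zetan h.*2) ->
  inJ h.*2.+1 (gamma * Y).
Proof.
move=> hY; apply: (@inJ_eq _ ( gamma * (Y - p%:P * zetan h.*2) + p%:P * (gamma * zetan h.*2))).
  ring.
by apply: inJD; apply: inJM => //; apply: gx0.
Qed.

Lemma chain h d : (d <= h)%N ->
  inJ h.*2.+1 (A h (h - d) - (Sq h d).2%:P * zetan h.*2) /\
  inJ h.*2.+1 (B h (h - d) - (Sq h d).1%:P * zetan h.*2) /\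
  inJ h.*2.+1 (gamma ^+ (h - (h - d)) * zetan (h - d).*2.+2).
Proof.
elim: d => [|d IH] hd.
  have e2 : (Sq h 0).2 = 1 by [].
  have e1 : (Sq h 0).1 = 0 by [].
  rewrite e1 e2.
  split.
    apply: (@inJ_eq _ 0); last exact: inJ0.
    by rewrite /A subn0 subnn expr0 polyC1; ring.
  split.
    apply: (@inJ_eq _ (zetan h.*2.+1)); last exact: inJz0.
    by rewrite /B subn0 subnn expr0 polyC0; ring.
  apply: (@inJ_eq _ (zetan h.*2.+2)); last exact: inJz1.
  by rewrite subn0 subnn expr0; ring.
have [IA [IB IL]] := IH (ltnW hd).
set j := (h - d.+1)%N.
have hj : (h - d = j.+1)%N by rewrite /j; lia.
have jh : (j < h)%N by rewrite /j; lia.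
rewrite hj in IA IB IL.
split.
  rewrite /=; apply: scale_rel; first by rewrite /ec.
  apply: (@inJ_eq _ ( (B h j.+1 - (Sq h d).1%:P * zetan h.*2)
        - alpha * (A h j.+1 - (Sq h d).2%:P * zetan h.*2))).
    rewrite (relE jh) rmorphB rmorphM /= /alpha; ring.
  by apply: inJB => //; apply: inJM.
split.
  rewrite /=; apply: scale_rel; first by rewrite /oc.
  apply: (@inJ_eq _ ( gamma ^+ (h - j.+1) * zetan j.*2.+4
        - alpha * (B h j.+1 - (Sq h d).1%:P * zetan h.*2)
        + (cc j)%:R * (A h j.+1 - (Sq h d).2%:P * zetan h.*2))).
    rewrite (relO jh) rmorphB !rmorphM /= /alpha natCAG; ring.
  apply: inJD; last by apply: inJM.
  apply: inJB; last by apply: inJM.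
  exact: IL.
rewrite -/j.
have -> : (h - j = (h - j.+1).+1)%N by lia.
rewrite exprS -mulrA.
have -> : zetan j.*2.+2 = zetan (j.+1).*2 by [].
exact: (gammaJ IA).
Qed.

Definition Ann h (p : {poly Cx}) := inJ h.*2.+1 (p%:P * zetan h.*2).

Lemma AnnM h q p : Ann h p -> Ann h (q * p).
Proof. by move=> hp; rewrite /Ann polyCM -mulrA; apply: inJM. Qed.

Lemma AnnD h p q : Ann h p -> Ann h q -> Ann h (p + q).
Proof. by move=> hp hq; rewrite /Ann polyCD mulrDl; apply: inJD. Qed.

Lemma AnnB h p q : Ann h p -> Ann h q -> Ann h (p - q).
Proof. by move=> hp hq; rewrite /Ann polyCB mulrBl; apply: inJB. Qed.

Definition f1 h := (Sq h h).1 - 'X * (Sq h h).2.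
Definition f2 h := 'X * (Sq h h).1 - ((16 * 1 ^ 2)%N%:R : Cx)%:P * (Sq h h).2.

Lemma Ann_f1 h : Ann h (f1 h).
Proof.
have [IA [IB _]] := chain (leqnn h).
rewrite subnn in IA IB.
rewrite /Ann; apply: (@inJ_eq _ ( - (B h 0 - (Sq h h).1%:P * zetan h.*2)
   + alpha * (A h 0 - (Sq h h).2%:P * zetan h.*2) + (B h 0 - alpha * A h 0))).
  rewrite /f1 /B /A zeta1 rmorphB rmorphM /= /alpha; ring.
apply: inJD; first by apply: inJD; [apply: inJN | apply: inJM].
rewrite /B /A zeta1 subn0; apply: inJ_eq inJ0; ring.
Qed.

Lemma Ann_f2 h : Ann h (f2 h).
Proof.
have [IA [IB IL]] := chain (leqnn h).
rewrite subnn in IA IB IL.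
rewrite /Ann; apply: (@inJ_eq _ ( - alpha * (B h 0 - (Sq h h).1%:P * zetan h.*2)
   + (16 * 1 ^ 2)%N%:R * (A h 0 - (Sq h h).2%:P * zetan h.*2)
   + (gamma ^+ (h - 0) * zetan 0.*2.+2))).
  rewrite /f2 /B /A zeta2 zeta1 rmorphB !rmorphM /= /alpha natCAG subn0; ring.
apply: inJD => //; apply: inJD; apply: inJM => //; apply: inJN => //.
Qed.

Lemma Ann_coef0 h F : inJ h.*2.+1 (F * zetan h.*2) -> Ann h (F`_0).
Proof.
move=> hF.
have : root (F - (F`_0)%:P) 0 by rewrite rootE hornerD hornerN hornerC horner_coef0 subrr eqxx.
case/factor_theorem => q hq.
have eF : F = (F`_0)%:P + q * gamma.
  rewrite -[F in LHS](subrK (F`_0)%:P) hq /gamma polyC0 subr0; exact: addrC.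
rewrite /Ann; apply: (@inJ_eq _ ( F * zetan h.*2 - q * (gamma * zetan h.*2))).
  by rewrite {1}eF; ring.
by apply: inJB => //; apply: inJM; apply: gx0.
Qed.

Definition sk (k : nat) : Cx := (4 * k.*2.+1)%N%:R.
Fixpoint Pe j : {poly Cx} := match j with 0 => 1
  | j'.+1 => Pe j' * (('X - (sk j')%:P) * ('X + (sk j')%:P)) end.

Lemma zetaO' j : exists Z, zetan (j.*2.+2) = alpha * zetan j.*2.+1
   - (16 * (j.*2.+1)^2)%N%:R * zetan j.*2 + gamma * Z.
Proof.
case: j => [|j].
  exists 0; have -> : (0.*2.+1 = 1)%N by [].
  rewrite zeta2; ring.
exists ((oc j)%:R * zetan j.*2.+1); rewrite doubleS zeta_odd /oc; ring.
Qed.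

Lemma coef0_step (P Q Z : CAG) (n : nat) :
  (alpha * P - n%:R * Q + gamma * Z)`_0 = 'X * P`_0 - n%:R * Q`_0.
Proof.
rewrite coefD coefB natCAG /alpha !coefCM /gamma coefXM /= addr0.
by rewrite -polyC_natr rmorph_nat.
Qed.

Lemma coef_zeta j : (zetan j.*2)`_0 = Pe j /\ (zetan j.*2.+1)`_0 = 'X * Pe j.
Proof.
elim: j => [|j [IH1 IH2]].
  have z0 : zetan 0.*2 = 1 by [].
  split; first by rewrite z0 coef1 eqxx.
  have -> : zetan 0.*2.+1 = alpha * zetan 0 by exact: zeta1.
  by rewrite /alpha coefCM z0 coef1 eqxx.
have [Z eZ] := zetaO' j.
have e1 : (zetan (j.+1).*2)`_0 = Pe j.+1.
  rewrite doubleS eZ coef0_step IH1 IH2 /= /sk.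
  rewrite -!polyC_natr !rmorph_nat; ring.
split => //.
have -> : zetan (j.+1).*2.+1 = alpha * zetan (j.+1).*2 - 0%N%:R * 0 + gamma * ((ec j)%:R * zetan j.*2).
  rewrite doubleS zeta_even /ec; ring.
by rewrite coef0_step e1 coef0; ring.
Qed.

Lemma peel h q (r : Cx) f : Ann h (q * ('X - r%:P)) -> Ann h f -> f.[r] != 0 -> Ann h q.
Proof.
move=> hq hf hr.
have : root (f - (f.[r])%:P) r by rewrite rootE hornerD hornerN hornerC subrr eqxx.
case/factor_theorem => q' hq'.
have e : (f.[r])%:P * q = q * f - q' * (q * ('X - r%:P)).
  have ef : f = q' * ('X - r%:P) + (f.[r])%:P by rewrite -hq' subrK.
  set c := f.[r]; rewrite [in q * f]ef; ring.
have h1 : Ann h ((f.[r])%:P * q) by rewrite e; apply: AnnB; apply: AnnM.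
have := AnnM ((f.[r])^-1)%:P h1.
by rewrite mulrA -polyCM mulVf // mul1r.
Qed.

Local Notation RR := Rdefinitions.R.
Local Open Scope complex_scope.
Local Open Scope ring_scope.

Fixpoint Se (h d : nat) (x : RR) : RR * RR :=
  match d with
  | 0 => (0, 1)
  | d'.+1 => let j := (h - d'.+1)%N in
      ((((oc j)%:R)^-1) * ((cc j)%:R * (Se h d' x).2 - x * (Se h d' x).1),
       (((ec j)%:R)^-1) * ((Se h d' x).1 - x * (Se h d' x).2))
  end.

Lemma Sq_horner h d (x : RR) :
  (Sq h d).1.[x%:C] = ((Se h d x).1)%:C /\ (Sq h d).2.[x%:C] = ((Se h d x).2)%:C.
Proof.
elim: d => [|d [IH1 IH2]] /=.
  by split; [rewrite horner0 rmorph0 | rewrite -polyC1 hornerC rmorph1].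
rewrite !hornerE IH1 IH2.
by rewrite !(rmorphM, rmorphB, fmorphV, rmorph_nat).
Qed.

Definition invp (b a : RR) := ((0 <= b /\ a <= 0) \/ (b <= 0 /\ 0 <= a)) /\ ~ (b = 0 /\ a = 0).
Definition invn (b a : RR) := ((0 <= b /\ 0 <= a) \/ (b <= 0 /\ a <= 0)) /\ ~ (b = 0 /\ a = 0).

Lemma core_p (x b a c : RR) : 0 <= x -> 0 < c -> invp b a -> invp (c*a - x*b) (b - x*a).
Proof.
move=> hx hc [hs hnz]; split.
  case: hs => [[hb ha]|[hb ha]].
    right; split; nra.
  left; split; nra.
move=> [h1 h2]; apply: hnz.
case: hs => [[hb ha]|[hb ha]].
  have hca : c * a = 0 by nra.
  have ha0 : a = 0 by move/eqP: hca; rewrite mulf_eq0 => /orP[/eqP|/eqP] //; lra.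
  split => //; nra.
have hca : c * a = 0 by nra.
have ha0 : a = 0 by move/eqP: hca; rewrite mulf_eq0 => /orP[/eqP|/eqP] //; lra.
split => //; nra.
Qed.

Lemma core_n (x b a c : RR) : x <= 0 -> 0 < c -> invn b a -> invn (c*a - x*b) (b - x*a).
Proof.
move=> hx hc [hs hnz]; split.
  case: hs => [[hb ha]|[hb ha]].
    left; split; nra.
  right; split; nra.
move=> [h1 h2]; apply: hnz.
case: hs => [[hb ha]|[hb ha]].
  have hca : c * a = 0 by nra.
  have ha0 : a = 0 by move/eqP: hca; rewrite mulf_eq0 => /orP[/eqP|/eqP] //; lra.
  split => //; nra.
have hca : c * a = 0 by nra.
have ha0 : a = 0 by move/eqP: hca; rewrite mulf_eq0 => /orP[/eqP|/eqP] //; lra.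
split => //; nra.
Qed.

Lemma scale_p (u v b a : RR) : 0 < u -> 0 < v -> invp b a -> invp (u * b) (v * a).
Proof.
move=> hu hv [hs hnz]; split.
  case: hs => [[hb ha]|[hb ha]]; [left|right]; split; nra.
move=> [h1 h2]; apply: hnz; split.
  by move/eqP: h1; rewrite mulf_eq0 => /orP[/eqP|/eqP] //; lra.
by move/eqP: h2; rewrite mulf_eq0 => /orP[/eqP|/eqP] //; lra.
Qed.

Lemma scale_n (u v b a : RR) : 0 < u -> 0 < v -> invn b a -> invn (u * b) (v * a).
Proof.
move=> hu hv [hs hnz]; split.
  case: hs => [[hb ha]|[hb ha]]; [left|right]; split; nra.
move=> [h1 h2]; apply: hnz; split.
  by move/eqP: h1; rewrite mulf_eq0 => /orP[/eqP|/eqP] //; lra.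
by move/eqP: h2; rewrite mulf_eq0 => /orP[/eqP|/eqP] //; lra.
Qed.

Lemma pos_inv (n : nat) : (0 < n)%N -> 0 < ((n%:R : RR)^-1).
Proof. by move=> hn; rewrite invr_gt0 ltr0n. Qed.

Lemma Se_invp h d x : 0 <= x -> invp (Se h d x).1 (Se h d x).2.
Proof.
move=> hx; elim: d => [|d IH] /=.
  split; [right; split; lra | move=> [_ h1]; lra].
apply: scale_p; [apply: pos_inv; by rewrite /oc !muln_gt0 | apply: pos_inv; by rewrite /ec !muln_gt0 |].
apply: core_p => //; by rewrite ltr0n /cc muln_gt0 expn_gt0.
Qed.

Lemma Se_invn h d x : x <= 0 -> invn (Se h d x).1 (Se h d x).2.
Proof.
move=> hx; elim: d => [|d IH] /=.
  split; [left; split; lra | move=> [_ h1]; lra].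
apply: scale_n; [apply: pos_inv; by rewrite /oc !muln_gt0 | apply: pos_inv; by rewrite /ec !muln_gt0 |].
apply: core_n => //; by rewrite ltr0n /cc muln_gt0 expn_gt0.
Qed.

Lemma nonvan h (x : RR) : ~ ((f1 h).[x%:C] = 0 /\ (f2 h).[x%:C] = 0).
Proof.
have [H1 H2] := Sq_horner h h x.
set b := (Se h h x).1; set a := (Se h h x).2.
have e1 : (f1 h).[x%:C] = (b - x * a)%:C.
  by rewrite /f1 !hornerE H1 H2 rmorphB rmorphM.
have e2 : (f2 h).[x%:C] = - (16%:R * a - x * b)%:C.
  rewrite /f2 !hornerE H1 H2 rmorphB !rmorphM rmorph_nat /=.
  by rewrite opprB.
rewrite e1 e2 => [[h1 h2]].
have k1 : b - x * a = 0 by apply: (@complexI RR); rewrite h1 rmorph0.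
have k2 : 16%:R * a - x * b = 0.
  apply: (@complexI RR); rewrite rmorph0; apply/eqP; rewrite -oppr_eq0; apply/eqP; exact: h2.
have h16 : (0 : RR) < 16%:R by rewrite ltr0n.
have [hx|hx] := lerP 0 x.
  have [_ hnz] := core_p hx h16 (Se_invp h h hx).
  by apply: hnz.
have hx' : x <= 0 by lra.
have [_ hnz] := core_n hx' h16 (Se_invn h h hx').
by apply: hnz.
Qed.

Lemma peel_real h q (x : RR) : Ann h (q * ('X - (x%:C)%:P)) -> Ann h q.
Proof.
move=> hq.
case: (eqVneq ((f1 h).[x%:C]) 0) => h1.
  case: (eqVneq ((f2 h).[x%:C]) 0) => h2.
    exfalso; exact: (nonvan (conj h1 h2)).
  exact: (peel hq (Ann_f2 h) h2).
exact: (peel hq (Ann_f1 h) h1).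
Qed.

Lemma peel_all h m q : Ann h (q * ('X * Pe m)) -> Ann h q.
Proof.
elim: m q => [|m IH] q /=.
  rewrite mulr1 => hq; apply: (@peel_real h q 0).
  by rewrite rmorph0 subr0.
move=> hq.
set n := (4 * m.*2.+1)%N.
have es : sk m = ((n%:R : RR))%:C by rewrite rmorph_nat.
have hq2 : Ann h (q * ('X - (sk m)%:P) * ('X + (sk m)%:P)).
  apply: IH; move: hq; congr Ann; ring.
have hq1 : Ann h (q * ('X - (sk m)%:P)).
  apply: (@peel_real h _ (- (n%:R : RR))).
  have e2 : ((- (n%:R : RR))%:C)%:P = - (sk m)%:P :> {poly Cx} by rewrite es !rmorphN.
  by rewrite e2 opprK.
apply: (@peel_real h _ (n%:R : RR)).
have e1 : ((n%:R : RR)%:C)%:P = (sk m)%:P :> {poly Cx} by rewrite es.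
by rewrite e1.
Qed.

Lemma x0_in h : inJ h.*2.+1 (zetan h.*2).
Proof.
have hA : Ann h ('X * Pe h).
  have [_ <-] := coef_zeta h.
  by apply: Ann_coef0; rewrite mulrC; apply: inJM; apply: inJz0.
have := @peel_all h h 1; rewrite mul1r => /(_ hA).
by rewrite /Ann polyC1 mul1r.
Qed.

Lemma AB_in h j : (j <= h)%N -> inJ h.*2.+1 (A h j) /\ inJ h.*2.+1 (B h j).
Proof.
move=> hj; have [IA [IB _]] := chain (leq_subr j h).
have e : (h - (h - j) = j)%N by lia.
rewrite e in IA IB.
have hx := x0_in h.
split.
  by apply: inJ_eq (inJD IA (inJM ((Sq h (h - j)).2%:P) hx)); rewrite subrK.
by apply: inJ_eq (inJD IB (inJM ((Sq h (h - j)).1%:P) hx)); rewrite subrK.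
Qed.

Lemma a_in h i : inJ h.*2.+1 (gamma ^+ i * zeta ((h.*2.+1)%:Z - 2 * i%:Z - 1)).
Proof.
case: (leqP i h) => hi.
  have e : ((h.*2.+1)%:Z - 2 * i%:Z - 1) = ((h - i).*2)%:Z.
    rewrite -!muln2; lia.
  rewrite e /=.
  have := (AB_in (leq_subr i h)).1; rewrite /A.
  by have -> : (h - (h - i) = i)%N by lia.
have e : ((h.*2.+1)%:Z - 2 * i%:Z - 1) = Negz ((i - h).*2.-1).
  rewrite NegzE -!muln2; lia.
by rewrite e /= mulr0; apply: inJ0.
Qed.

Lemma b_in h i : inJ h.*2.+1 (gamma ^+ i.+1 * zeta ((h.*2.+1)%:Z - 2 * i%:Z - 2)).
Proof.
case: (ltnP i h) => hi.
  have e : ((h.*2.+1)%:Z - 2 * i%:Z - 2) = ((h - i.+1).*2.+1)%:Z.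
    rewrite -!muln2; lia.
  rewrite e /=.
  have := (AB_in (leq_subr i.+1 h)).2; rewrite /B.
  by have -> : (h - (h - i.+1) = i.+1)%N by lia.
have e : ((h.*2.+1)%:Z - 2 * i%:Z - 2) = Negz ((i - h).*2).
  rewrite NegzE -!muln2; lia.
by rewrite e /= mulr0; apply: inJ0.
Qed.

Lemma c_in h i : inJ h.*2.+1 (gamma ^+ i.+1 * zeta ((h.*2.+1)%:Z - 2 * i%:Z - 3)).
Proof.
have e : ((h.*2.+1)%:Z - 2 * i%:Z - 3) = ((h.*2.+1)%:Z - 2 * (i.+1)%:Z - 1).
  lia.
rewrite e; exact: a_in.
Qed.

Unset Implicit Arguments.
Theorem lemma5p4 (g i : nat) (hg1 : (1 <= g)%N) (hgodd : odd g) :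
  (exists u : CAG, unit_modJ g u /\
     congJ g (u * gamma ^+ i * zeta (g%:Z - 2 * i%:Z - 1))
             (gamma ^+ i.+1 * zeta (g%:Z - 2 * i%:Z - 2)))
  /\
  (exists v : CAG, unit_modJ g v /\
     congJ g (v * gamma ^+ i * zeta (g%:Z - 2 * i%:Z - 1))
             (gamma ^+ i.+1 * zeta (g%:Z - 2 * i%:Z - 3))).
Proof.
have eg : g = (g./2).*2.+1.
  by rewrite -[g in LHS]odd_double_half hgodd add1n.
move: (g./2) eg => h ->.
have hu : unit_modJ h.*2.+1 1 by exists 1; rewrite /congJ mulr1 subrr; apply: inJ0.
split; exists 1; split => //; rewrite /congJ mul1r; apply: inJB.
- exact: a_in.
- exact: b_in.
- exact: a_in.
- exact: c_in.
Qed.
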